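(* Let $b,\ell,u$ be integers with $\ell\geqslant u\geqslant 0$ and $b\geqslant 10\ell$. There exists a set $\mathfrak{B}$ of integer $2\times3$ matrices which is the disjoint union of two subsets $\mathfrak{B}^0$ and $\mathfrak{B}^1$ with $|\mathfrak{B}^0|=2(\ell-u)$ and $|\mathfrak{B}^1|=2u$, such that $\sigma_r(M)=(0,0)$ and $\sigma_c(M)=(-4,2,2)$ for all $M\in\mathfrak{B}^0$, $\sigma_r(M)=(2,-2)$ and $\sigma_c(M)=(-4,2,2)$ for all $M\in\mathfrak{B}^1$, and the multiset of absolute values of all entries of all matrices in $\mathfrak{B}$ is exactly the set $[b-6\ell+1,b+2\ell]\cup[2b-8\ell+2,2b]_2$ (each element occurring once).
   Context: For integers $a\equiv b\pmod d$ with $d\geqslant1$, $[a,b]_d=\{a+id: 0\leqslant i\leqslant (b-a)/d\}$ if $a\leqslant b$ and $[a,b]_d=\varnothing$ if $a>b$; $[a,b]=[a,b]_1$. For a matrix $M$, $\sigma_r(M)$ is the sequence of its row sums and $\sigma_c(M)$ the sequence of its column sums. *)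

(* Defs.v *)
From HB Require Import structures.
From mathcomp Require Import all_boot all_order all_algebra.
Set Implicit Arguments. Unset Strict Implicit. Unset Printing Implicit Defensive.
Import Order.TTheory GRing.Theory Num.Theory.
Local Open Scope ring_scope.

Definition intv (a c d : int) : seq int :=
  if a <= c then [seq a + (i%:Z) * d | i <- iota 0 (absz ((c - a) %/ d)%Z).+1]
  else [::].

Definition sigma_r (M : 'M[int]_(2,3)) : seq int :=
  [seq \sum_(j < 3) M i j | i <- enum 'I_2].
Definition sigma_c (M : 'M[int]_(2,3)) : seq int :=
  [seq \sum_(i < 2) M i j | j <- enum 'I_3].

Definition entries (M : 'M[int]_(2,3)) : seq int :=
  [seq M i j | i <- enum 'I_2, j <- enum 'I_3].

(* Main.v *)
Require Import Defs.
From HB Require Import structures.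
From mathcomp Require Import all_boot all_order all_algebra.
From mathcomp Require Import zify.
Import Order.TTheory GRing.Theory Num.Theory.
Local Open Scope ring_scope.

Definition mx6 (a1 a2 a3 d1 d2 d3 : int) : 'M[int]_(2,3) :=
  \matrix_(i < 2, j < 3) nth 0 (if val i == 0%N then [:: a1; a2; a3] else [:: d1; d2; d3]) j.
Lemma entries_mx6 a1 a2 a3 d1 d2 d3 : entries (mx6 a1 a2 a3 d1 d2 d3) = [:: a1; a2; a3; d1; d2; d3].
Proof. rewrite /entries !enum_ordSl enum_ord0 /= !mxE /=. done. Qed.
Lemma sr_mx6 a1 a2 a3 d1 d2 d3 : sigma_r (mx6 a1 a2 a3 d1 d2 d3) = [:: a1 + a2 + a3; d1 + d2 + d3].
Proof. rewrite /sigma_r !enum_ordSl enum_ord0 /= !big_ord_recr !big_ord0 /= !mxE /= !add0r. done. Qed.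
Lemma sc_mx6 a1 a2 a3 d1 d2 d3 : sigma_c (mx6 a1 a2 a3 d1 d2 d3) = [:: a1 + d1; a2 + d2; a3 + d3].
Proof. rewrite /sigma_c !enum_ordSl enum_ord0 /= !big_ord_recr !big_ord0 /= !mxE /= !add0r. done. Qed.

Section C.
Variables (c : int) (n : nat).
Definition xso (j : nat) := c + 1 + 4 * j%:Z.
Definition xto (j : nat) := c + 1 + 4 * n%:Z + 4 * j%:Z.
Definition Ea j := xso j + xto j.
Definition Eb j := Ea j + 2.
Definition se j := xso j + 1.
Definition te j := xto j + 1.
Definition Ma j := mx6 (Ea j) (- xso j) (- xto j) (- (Ea j + 4)) (xso j + 2) (xto j + 2).
Definition Mb j := mx6 (Eb j) (- se j) (- te j) (- (Eb j + 4)) (se j + 2) (te j + 2).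
Definition Nb j := mx6 (Eb j) (- xso j) (- xto j) (- (Eb j + 4)) (xso j + 2) (xto j + 2).
Definition Na j := mx6 (- (Ea j + 4)) (se j + 2) (te j + 2) (Ea j) (- se j) (- te j).
Definition V j := [:: xso j; se j; xso j + 2; se j + 2; xto j; te j; xto j + 2; te j + 2;
                      Ea j; Eb j; Ea j + 4; Eb j + 4].
End C.

Lemma perm_idx (V : seq int) idx : perm_eq idx (iota 0 (size V)) ->
  perm_eq (map (nth 0 V) idx) V.
Proof.
move=> h; rewrite -{2}(take_size V) -(map_nth_iota0 0 (leqnn (size V))).
exact: perm_map.
Qed.

Lemma perm_flat (f g : nat -> seq int) s : (forall j, perm_eq (f j) (g j)) ->
  perm_eq (flatten (map f s)) (flatten (map g s)).
Proof. move=> h; elim: s => //= x s IH; exact: perm_cat. Qed.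

Lemma flat_entries (g : nat -> seq 'M[int]_(2,3)) s :
  flatten (map entries (flatten (map g s))) =
  flatten (map (fun j => flatten (map entries (g j))) s).
Proof. elim: s => //= x s IH; by rewrite map_cat flatten_cat IH. Qed.

Lemma size_flat2 (X Y : nat -> 'M[int]_(2,3)) s :
  size (flatten (map (fun j => [:: X j; Y j]) s)) = (2 * size s)%N.
Proof. elim: s => //= x s IH; rewrite IH; lia. Qed.

Lemma uniq_of_entries (s : seq 'M[int]_(2,3)) :
  uniq (flatten (map entries s)) -> uniq s.
Proof.
elim: s => //= x s IH; rewrite cat_uniq => /and3P [_ H2 H3].
rewrite IH // andbT; apply/negP => xs.
move/hasPn: H2 => /(_ (x ord0 ord0)) H.
have : x ord0 ord0 \in entries x by rewrite /entries !enum_ordSl /= inE eqxx.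
move=> e.
have : x ord0 ord0 \in flatten (map entries s).
  by apply/flattenP; exists (entries x) => //; apply: map_f.
by move/H; rewrite e.
Qed.

Ltac unf := unfold Eb, Ea, se, te, xso, xto.

Lemma perm0 c n j : 0 <= c ->
  perm_eq (map (fun x : int => `|x|) (flatten (map entries [:: Ma c n j; Mb c n j]))) (V c n j).
Proof.
move=> hc.
have -> : map (fun x : int => `|x|) (flatten (map entries [:: Ma c n j; Mb c n j])) =
   map (nth 0 (V c n j)) [:: 8; 0; 4; 10; 2; 6; 9; 1; 5; 11; 3; 7]%N.
  rewrite /= !entries_mx6 /=.
  repeat congr (_ :: _); unf; lia.
by apply: perm_idx.
Qed.

Lemma perm1 c n j : 0 <= c ->
  perm_eq (map (fun x : int => `|x|) (flatten (map entries [:: Na c n j; Nb c n j]))) (V c n j).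
Proof.
move=> hc.
have -> : map (fun x : int => `|x|) (flatten (map entries [:: Na c n j; Nb c n j])) =
   map (nth 0 (V c n j)) [:: 10; 3; 7; 8; 1; 5; 9; 0; 4; 11; 2; 6]%N.
  rewrite /= !entries_mx6 /=.
  repeat congr (_ :: _); unf; lia.
by apply: perm_idx.
Qed.

Lemma perm6 (a a' b b' d d' : seq int) :
  perm_eq ((a ++ a') ++ (b ++ b') ++ (d ++ d')) ((a ++ b ++ d) ++ (a' ++ b' ++ d')).
Proof. apply/permP => p; rewrite !count_cat; lia. Qed.

Lemma blocks c n m :
  perm_eq (flatten (map (V c n) (iota 0 m)))
    (map (fun i : nat => c + 1 + i%:Z) (iota 0 (4 * m)) ++
     map (fun i : nat => c + 1 + i%:Z) (iota (4 * n) (4 * m)) ++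
     map (fun i : nat => 2 * c + 4 * n%:Z + 2 + i%:Z * 2) (iota 0 (4 * m))).
Proof.
elim: m => [|m IH] //.
rewrite -addn1 iotaD map_cat flatten_cat add0n.
rewrite (mulnDr 4 m 1) muln1 (iotaD 0 (4 * m) 4) (iotaD (4 * n) (4 * m) 4) !map_cat.
have -> : flatten [seq V c n i | i <- iota m 1] =
   [seq c + 1 + i%:Z | i <- iota (4 * m) 4] ++
   [seq c + 1 + i%:Z | i <- iota (4 * n + 4 * m) 4] ++
   [seq 2 * c + 4 * n%:Z + 2 + i%:Z * 2 | i <- iota (4 * m) 4].
  rewrite /= /V; repeat congr (_ :: _); unf; lia.
rewrite ?add0n.
apply/permP => p; have := permP IH p; rewrite !count_cat; lia.
Qed.

Lemma intv1 (b : int) (n : nat) :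
  intv (b - 6 * n%:Z + 1) (b + 2 * n%:Z) 1 =
  map (fun i : nat => (b - 6 * n%:Z) + 1 + i%:Z) (iota 0 (8 * n)).
Proof.
rewrite /intv; case: n => [|n].
  by rewrite ifF //; apply/negbTE; rewrite -ltNge; lia.
rewrite ifT; last by lia.
rewrite divz1.
have -> : b + 2 * n.+1%:Z - (b - 6 * n.+1%:Z + 1) = (8 * n.+1 - 1)%N%:Z by lia.
have -> : (absz (8 * n.+1 - 1)%N%:Z).+1 = (8 * n.+1)%N by rewrite /=; lia.
by apply: eq_map => i; rewrite mulr1.
Qed.

Lemma intv2 (b : int) (n : nat) :
  intv (2 * b - 8 * n%:Z + 2) (2 * b) 2 =
  map (fun i : nat => 2 * (b - 6 * n%:Z) + 4 * n%:Z + 2 + i%:Z * 2) (iota 0 (4 * n)).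
Proof.
rewrite /intv; case: n => [|n].
  by rewrite ifF //; apply/negbTE; rewrite -ltNge; lia.
rewrite ifT; last by lia.
have -> : 2 * b - (2 * b - 8 * n.+1%:Z + 2) = (4 * n.+1 - 1)%N%:Z * 2 by lia.
rewrite mulzK //.
have -> : (absz (4 * n.+1 - 1)%N%:Z).+1 = (4 * n.+1)%N by rewrite /=; lia.
by apply: eq_map => i; congr (_ + _); lia.
Qed.

Theorem lemma2p5 (b l u : int) :
  0 <= u -> u <= l -> 10 * l <= b ->
  exists B0 B1 : seq 'M[int]_(2,3),
    uniq (B0 ++ B1) /\
    (size B0)%:Z = 2 * (l - u) /\
    (size B1)%:Z = 2 * u /\
    (forall M, M \in B0 -> sigma_r M = [:: 0; 0] /\ sigma_c M = [:: -4; 2; 2]) /\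
    (forall M, M \in B1 -> sigma_r M = [:: 2; -2] /\ sigma_c M = [:: -4; 2; 2]) /\
    perm_eq [seq `|x| | x <- flatten [seq entries M | M <- B0 ++ B1]]
            (undup (intv (b - 6 * l + 1) (b + 2 * l) 1 ++
                    intv (2 * b - 8 * l + 2) (2 * b) 2)).
Proof.
case: u => [k|k] hu //; case: l => [n|n] hul // hb.
have hc : 0 <= b - 6 * n%:Z by lia.
have hkn : (k <= n)%N by lia.
exists (flatten [seq [:: Ma (b - 6 * n%:Z) n j; Mb (b - 6 * n%:Z) n j] | j <- iota k (n - k)]).
exists (flatten [seq [:: Na (b - 6 * n%:Z) n j; Nb (b - 6 * n%:Z) n j] | j <- iota 0 k]).
have P : perm_eq [seq `|x| | x <- flatten [seq entries M | M <-
    flatten [seq [:: Ma (b - 6 * n%:Z) n j; Mb (b - 6 * n%:Z) n j] | j <- iota k (n - k)] ++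
    flatten [seq [:: Na (b - 6 * n%:Z) n j; Nb (b - 6 * n%:Z) n j] | j <- iota 0 k]]]
            (undup (intv (b - 6 * n%:Z + 1) (b + 2 * n%:Z) 1 ++
                    intv (2 * b - 8 * n%:Z + 2) (2 * b) 2)).
  rewrite map_cat flatten_cat !flat_entries map_cat !map_flatten -!map_comp.
  apply: (@perm_trans _ (flatten (map (V (b - 6 * n%:Z) n) (iota k (n - k))) ++
                         flatten (map (V (b - 6 * n%:Z) n) (iota 0 k)))).
    by apply: perm_cat; apply: perm_flat => j /=; [exact: perm0 | exact: perm1].
  rewrite perm_catC -flatten_cat -map_cat -{1}(add0n k) -iotaD subnKC //.
  rewrite intv1 intv2 undup_id.
    have -> : (8 * n = 4 * n + 4 * n)%N by lia.
    rewrite iotaD map_cat -catA add0n; exact: blocks.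
  rewrite cat_uniq; apply/and3P; split.
  - rewrite map_inj_uniq ?iota_uniq // => x y; lia.
  - apply/hasPn => x /mapP [i]; rewrite mem_iota => hi -> /=.
    apply/negP => /mapP [j]; rewrite mem_iota => hj; lia.
  - rewrite map_inj_uniq ?iota_uniq // => x y; lia.
split.
  have := perm_uniq P; rewrite undup_uniq => /map_uniq; exact: uniq_of_entries.
split; first by rewrite size_flat2 size_iota; lia.
split; first by rewrite size_flat2 size_iota; lia.
split.
  move=> M /flattenP [t /mapP [j _ ->]]; rewrite !inE => /orP [] /eqP ->;
  rewrite ?/Ma ?/Mb sr_mx6 sc_mx6; split; repeat congr (_ :: _); unf; lia.
split.
  move=> M /flattenP [t /mapP [j _ ->]]; rewrite !inE => /orP [] /eqP ->;
  rewrite ?/Na ?/Nb sr_mx6 sc_mx6; split; repeat congr (_ :: _); unf; lia.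
exact: P.
Qed.
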